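(* Assume condition (G) on the groups and (A2), and let $\alpha$ and $(\beta_n)$ be such that $\beta_n\to0$ and $\lim_{n\to\infty}mpBFDR_{\beta_n}=\alpha$ with $\alpha$ in the feasible range $\left(\frac{1}{\sum_i d^t_i+1},\frac{m-m_1}{\sum_i d^t_i+m-m_1}\right)$ (as provided by the $\alpha$-control theorem). Let $\tilde H_{\min}=\min_{i:d^t_i=0}J(H_{1i})$. Then for the non-marginal procedure with penalties $\beta_n$, almost surely, $$\limsup_{n\to\infty}\frac1n\log FNR_{\mathbf X_n}\le-\tilde H_{\min}.$$
   Context: Data and models: $\mathbf X_n=(X_1,\ldots,X_n)$ are the first $n$ coordinates of a process with true distribution $P$; $p(\mathbf X_n)$ is the true joint density and $f_{\boldsymbol\theta}(\mathbf X_n)$ the postulated density for $\boldsymbol\theta=(\theta_1,\ldots,\theta_M)\in\boldsymbol\Theta=\Theta_1\times\cdots\times\Theta_M$ ($M\le\infty$); $P$ need not belong to the postulated family. $\pi$ is a prior on $\boldsymbol\Theta$, $\pi(\cdot\mid\mathbf X_n)$ the posterior; $E_{\mathbf X_n},P_{\mathbf X_n}$ denote expectation/probability over the data under $P$. For finitely many indices $i=1,\ldots,m$ ($1<m\le M$) one tests $H_{0i}:\theta_i\in\Theta_{0i}$ vs $H_{1i}:\theta_i\in\Theta_{1i}$, where $\Theta_{0i}\cap\Theta_{1i}=\emptyset$, $\Theta_{0i}\cup\Theta_{1i}=\Theta_i$. A decision configuration is $\mathbf d=(d_1,\ldots,d_m)\in\mathbb D=\{0,1\}^m$ ($d_i=1$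 means $H_{0i}$ is rejected); $\Theta_{d_jj}$ means $\Theta_{0j}$ if $d_j=0$ and $\Theta_{1j}$ if $d_j=1$. $\mathbf 0,\mathbf 1$ denote the all-zero and all-one configurations. KL quantities: $h(\boldsymbol\theta)=\lim_{n}n^{-1}E_P[\log(p(\mathbf X_n)/f_{\boldsymbol\theta}(\mathbf X_n))]$; for measurable $A$, $h(A)=\pi\text{-}\operatorname{ess\,inf}_{\boldsymbol\theta\in A}h(\boldsymbol\theta)$, $J(\boldsymbol\theta)=h(\boldsymbol\theta)-h(\boldsymbol\Theta)$, $J(A)=\pi\text{-}\operatorname{ess\,inf}_{\boldsymbol\theta\in A}J(\boldsymbol\theta)$. Let $\boldsymbol\Theta(\mathbf d)=\prod_{i=1}^m\Theta_{d_ii}\times\prod_{i>m}\Theta_i$; the true configuration $\mathbf d^t$ is the unique $\mathbf d$ with $J(\boldsymbol\Theta(\mathbf d))=J(\boldsymbol\Theta)$. Groups and sets: for each $i$ a set $G_i\subseteq\{1,\ldots,m\}$ with $i\in G_i$ is fixed. Let $\Psi_{i\mathbf d}=\{\boldsymbol\theta:\theta_i\in\Theta_{1i},\ \theta_j\in\Theta_{d_jj}\ \forall j\in G_i\setminus\{i\}\}$ and $\Upsilon_{ki}=\{\boldsymbol\theta:\theta_i\in\Theta_{ki}\}$, $k=0,1$. Write $J(\boldsymbol\Theta_{i\mathbf d})=J(\Psi_{i\mathbf d})$, $J(\boldsymbol\Theta^c_{i\mathbf d})=J(\boldsymbol\Theta\setminus\Psi_{i\mathbf d})$, $J(H_{ki})=J(\Upsilon_{ki})$.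 $\mathbb D_i=\{\mathbf d: d_j=d^t_j\ \forall j\in G_i\}$. Posterior probabilities: $w_{in}(\mathbf d)=\pi(\Psi_{i\mathbf d}\mid\mathbf X_n)$, $v_{in}=\pi(\Upsilon_{1i}\mid\mathbf X_n)$. Standing assumption (posterior exponential concentration, i.e. the conclusion of Shalizi's (2009) theorem under his conditions (S1)–(S7), assumed throughout): for all $i,\mathbf d,k$ the sets $A=\Psi_{i\mathbf d}$, $\boldsymbol\Theta\setminus\Psi_{i\mathbf d}$, $\Upsilon_{ki}$ have $\pi(A)>0$ and satisfy $\lim_{n\to\infty}n^{-1}\log\pi(A\mid\mathbf X_n)=-J(A)$ $P$-a.s.; moreover $J(\boldsymbol\Theta_{i\mathbf d})>0$ for $\mathbf d\notin\mathbb D_i$, $J(\boldsymbol\Theta_{i\mathbf d^t})>0$ when $d^t_i=0$, $J(\boldsymbol\Theta^c_{i\mathbf d^t})>0$ when $d^t_i=1$, $J(H_{1i})>0$ when $d^t_i=0$, $J(H_{0i})>0$ when $d^t_i=1$. Procedures: given $\beta_n\in[0,1)$, the non-marginal procedure selects $\hat{\mathbf d}=\arg\max_{\mathbf d\in\mathbb D}\sum_{i=1}^m d_i(w_{in}(\mathbf d)-\beta_n)$ (ties broken by any fixed rule) and sets $\delta_{NM}(\mathbf d\mid\mathbf X_n)=1$ if $\mathbf d=\hat{\mathbf d}$ and $0$ otherwise. $mpBFDR_\beta$ denotes the $mpBFDR$ of this procedure with penalty $\beta$. Error measures (with $\delta=\delta_{NM}$): $mFDR_{\mathbf X_n}=\sum_{\mathbf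 d}\frac{\sum_i d_i(1-w_{in}(\mathbf d))}{(\sum_i d_i)\vee1}\delta(\mathbf d\mid\mathbf X_n)$, $FNR_{\mathbf X_n}=\sum_{\mathbf d}\frac{\sum_i(1-d_i)v_{in}}{(\sum_i(1-d_i))\vee1}\delta(\mathbf d\mid\mathbf X_n)$, $mpBFDR=E_{\mathbf X_n}[mFDR_{\mathbf X_n}\mid\delta(\mathbf 0\mid\mathbf X_n)=0]$. Known fact used (Chandra and Bhattacharya 2017): for each $n$, $\beta\mapsto mpBFDR_\beta$ is continuous and non-increasing on $[0,1]$. Condition (A2): $\mathbf d^t\ne\mathbf 0$ and $\mathbf d^t\ne\mathbf 1$. Condition (G): after relabelling, there is $m_1<m$ such that each of $G_1,\ldots,G_{m_1}$ contains at least one index $j$ with $d^t_j=1$, every index $j\in G_{m_1+1}\cup\cdots\cup G_m$ has $d^t_j=0$, and $(G_1\cup\cdots\cup G_{m_1})\cap(G_{m_1+1}\cup\cdots\cup G_m)=\emptyset$. *)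

(* Defs.v *)
From HB Require Import structures.
From mathcomp Require Import all_boot all_order all_algebra.
From mathcomp Require Import all_classical all_reals all_analysis.
Set Implicit Arguments. Unset Strict Implicit. Unset Printing Implicit Defensive.
Import Order.TTheory GRing.Theory Num.Theory.
Import numFieldNormedType.Exports.
Local Open Scope classical_set_scope.
Local Open Scope ring_scope.

Notation config m := {ffun 'I_m -> bool}.

Section NonMarginal.
Context {R : realType} {dO dT : measure_display}
  {Omega : measurableType dO} {Theta : measurableType dT}.

Definition logE (x : R) : \bar R := if x == 0 then -oo%E else (ln x)%:E.

Definition ess_inf_on (pi : {measure set Theta -> \bar R}) (A : set Theta)
  (f : Theta -> \bar R) : \bar R :=
  ereal_sup [set c : \bar R | pi (A `&` [set x | (f x < c)%E]) = 0%E].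

Variables (P : probability Omega R) (pi : probability Theta R) (m : nat).
(* lr n theta omega = log (f_theta(X_n(omega)) / p(X_n(omega))) *)
Variable lr : nat -> Theta -> Omega -> R.
(* Ups1 i = Upsilon_{1i} = {theta | theta_i \in Theta_{1i}} *)
Variable Ups1 : 'I_m -> set Theta.
Variable G : 'I_m -> {set 'I_m}.

Definition Ups (k : bool) (i : 'I_m) : set Theta :=
  if k then Ups1 i else ~` Ups1 i.

Definition Psi (i : 'I_m) (d : config m) : set Theta :=
  Ups1 i `&` \bigcap_(j in [set j | (j \in G i) && (j != i)]) Ups (d j) j.

Definition ThetaD (d : config m) : set Theta :=
  \bigcap_(j in [set: 'I_m]) Ups (d j) j.

Definition hseq (n : nat) (th : Theta) : R :=
  n%:R^-1 * fine (\int[P]_w (- lr n th w)%:E)%E.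
Definition h (th : Theta) : R := limn (fun n => hseq n th).
Definition hTheta : \bar R := ess_inf_on pi setT (fun th => (h th)%:E).
Definition Jfun (th : Theta) : \bar R := ((h th)%:E - hTheta)%E.
Definition JA (A : set Theta) : \bar R := ess_inf_on pi A Jfun.

Definition postNum (n : nat) (w : Omega) (A : set Theta) : \bar R :=
  (\int[pi]_(th in A) (expR (lr n th w))%:E)%E.
Definition post (n : nat) (w : Omega) (A : set Theta) : R :=
  fine (postNum n w A) / fine (postNum n w setT).

Definition w_in (i : 'I_m) (d : config m) (n : nat) (w : Omega) : R :=
  post n w (Psi i d).
Definition v_in (i : 'I_m) (n : nat) (w : Omega) : R := post n w (Ups1 i).

Definition Dset (dt : config m) (i : 'I_m) : set (config m) :=
  [set d | forall j, j \in G i -> d j = dt j].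

Definition score (beta : R) (n : nat) (w : Omega) (d : config m) : R :=
  \sum_(i < m) (d i)%:R * (w_in i d n w - beta).

(* a fixed tie-breaking rule: maps the vector of scores to a maximiser *)
Definition argmax_rule (rule : {ffun config m -> R} -> config m) : Prop :=
  forall (s : {ffun config m -> R}) (d : config m), s d <= s (rule s).

Definition dhat (rule : {ffun config m -> R} -> config m) (beta : R)
  (n : nat) (w : Omega) : config m :=
  rule [ffun d => score beta n w d].

Definition deltaNM rule beta n w (d : config m) : R :=
  (d == dhat rule beta n w)%:R.

Definition mFDR rule beta n w : R :=
  \sum_(d : config m)
    ((\sum_(i < m) (d i)%:R * (1 - w_in i d n w))
       / (maxn (\sum_(i < m) nat_of_bool (d i)) 1)%:R)
    * deltaNM rule beta n w d.

Definition FNR rule beta n w : R :=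
  \sum_(d : config m)
    ((\sum_(i < m) (~~ d i)%:R * v_in i n w)
       / (maxn (\sum_(i < m) nat_of_bool (~~ d i)) 1)%:R)
    * deltaNM rule beta n w d.

Definition config0 : config m := [ffun => false].
Definition config1 : config m := [ffun => true].

Definition mpBFDR rule beta n : R :=
  let E0 := [set w | deltaNM rule beta n w config0 = 0] in
  fine (\int[P]_(w in E0) (mFDR rule beta n w)%:E)%E / fine (P E0).

Definition true_config (dt : config m) : Prop :=
  JA (ThetaD dt) = JA setT /\ forall d, JA (ThetaD d) = JA setT -> d = dt.

(* standing assumption: posterior exponential concentration *)
Definition concentrates (A : set Theta) : Prop :=
  (0 < pi A)%E /\
  {ae P, forall w, (fun n => (n%:R^-1)%:E * logE (post n w A))%E @ \oo
                     --> (- JA A)%E}.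

Definition standing (dt : config m) : Prop :=
  (forall i d, concentrates (Psi i d) /\ concentrates (~` Psi i d)) /\
  (forall i k, concentrates (Ups k i)) /\
  (forall i d, ~ Dset dt i d -> (0 < JA (Psi i d))%E) /\
  (forall i, ~~ dt i -> (0 < JA (Psi i dt))%E) /\
  (forall i, dt i -> (0 < JA (~` Psi i dt))%E) /\
  (forall i, ~~ dt i -> (0 < JA (Ups1 i))%E) /\
  (forall i, dt i -> (0 < JA (~` Ups1 i))%E).

End NonMarginal.

(* Condition (G), without relabelling: S plays the role of {1,...,m1},
   so m1 = #|S| and m1 < m means some index lies outside S *)
Definition condG (m : nat) (G : 'I_m -> {set 'I_m}) (dt : config m)
  (S : {set 'I_m}) : Prop :=
  (exists i, i \notin S) /\
  (forall i, i \in S -> exists2 j, j \in G i & dt j) /\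
  (forall i, i \notin S -> forall j, j \in G i -> ~~ dt j) /\
  (forall j, ~ ((exists2 i, i \in S & j \in G i) /\
               (exists2 i, i \notin S & j \in G i))).

(* Main.v *)
Require Import Defs.
From HB Require Import structures.
From mathcomp Require Import all_boot all_order all_algebra.
From mathcomp Require Import all_classical all_reals all_analysis.
From mathcomp Require Import ring lra.
Import Order.TTheory GRing.Theory Num.Theory.
Import numFieldNormedType.Exports.
Import measurable_realfun.
Local Open Scope classical_set_scope.
Local Open Scope ring_scope.

Section Helpers.
Context {R : realType}.

Lemma ev_lt_e (u : nat -> \bar R) y x : u @ \oo --> y -> (y < x)%E ->
  \forall n \near \oo, (u n < x)%E.
Proof.
move=> uy yx.
have : nbhs y [set z | (z < x)%E].
  by apply: open_nbhs_nbhs; split => //; exact: open_ereal_lt_ereal.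
by move/uy.
Qed.

Lemma decay (p : nat -> R) c : (forall n, 0 <= p n) ->
  (\forall n \near \oo, ((n%:R^-1)%:E * logE (p n) < (- c)%:E)%E) ->
  \forall n \near \oo, p n <= expR (- c * n%:R).
Proof.
move=> p0 H; apply: filterS2 H (nbhs_infty_ger (1:R)) => n Hn n1.
move: Hn; rewrite /logE; case: eqP => [->|pn0]; first by rewrite expR_ge0.
rewrite -EFinM lte_fin => Hn.
have n0 : 0 < n%:R :> R by apply: lt_le_trans n1.
have pp : 0 < p n by rewrite lt_neqAle eq_sym; apply/andP; split; [apply/eqP|].
have e : ln (p n) = n%:R * (n%:R^-1 * ln (p n)) by rewrite mulrA mulfV ?mul1r // gt_eqF.
have : ln (p n) < - c * n%:R by rewrite e mulrC ltr_pM2r.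
move=> hl; apply: ltW; have pp' : p n \is Num.pos by rewrite posrE.
by rewrite -(lnK pp') ltr_expR.
Qed.

Lemma exists_below (J : \bar R) (c : R) : (c%:E < J)%E ->
  exists c2 : R, c < c2 /\ (c2%:E < J)%E.
Proof.
case: J => [r||] //.
- rewrite lte_fin => cr; exists ((c + r) / 2); rewrite lte_fin; split; lra.
- move=> _; exists (c + 1); split; [lra| exact: ltey].
Qed.

Lemma lim_zero (p : nat -> R) (J : \bar R) : (forall n, 0 <= p n) ->
  (fun n => (n%:R^-1)%:E * logE (p n))%E @ \oo --> (- J)%E -> (0 < J)%E ->
  forall eps, 0 < eps -> \forall n \near \oo, p n < eps.
Proof.
move=> p0 cv J0 eps e0.
have [c [c0 cJ]] := @exists_below J 0 J0.
have cJ' : (- J < (- c)%:E)%E by rewrite EFinN lteN2.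
have D := @decay p c p0 (ev_lt_e _ _ _ cv cJ').
apply: filterS2 D (nbhs_infty_gtr (- ln eps / c)) => n pn nb.
apply: le_lt_trans pn _.
rewrite -[X in _ < X](lnK (x:=eps)) ?posrE // ltr_expR.
rewrite ltr_pdivrMr // in nb; rewrite mulNr mulrC; lra.
Qed.


Lemma esup_le_ev (u : nat -> \bar R) l : (\forall n \near \oo, (u n <= l)%E) ->
  (limn_esup u <= l)%E.
Proof.
move=> [N _ HN]; rewrite limn_esup_lim; apply: lime_le; first exact: is_cvg_esups.
exists N => // n /= Nn; apply: ge_ereal_sup => _ [k /= Hk <-].
apply: HN; exact: leq_trans Nn Hk.
Qed.

Lemma le_negH (x H : \bar R) :
  (forall c : R, (c%:E < H)%E -> (x <= (- c)%:E)%E) -> (x <= - H)%E.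
Proof.
case: H => [r||] Hc.
- apply/lee_addgt0Pr => e e0; have := Hc (r - e); rewrite lte_fin.
  have -> : (- (r - e))%:E = (- r%:E + e%:E)%E by rewrite -EFinN -EFinD opprB addrC; congr EFin; lra.
  by apply; lra.
- case: x Hc => [s||] Hc //=.
  + have h := Hc (- s + 1) (ltey _); rewrite lee_fin in h; clear Hc; exfalso; lra.
  + by have := Hc 0 (ltey _).
- by rewrite leey.
Qed.

End Helpers.
Section Post.
Context {R : realType} {dO dT : measure_display}
  {Omega : measurableType dO} {Theta : measurableType dT}.
Context (pi : probability Theta R) (lr : nat -> Theta -> Omega -> R).

Lemma postNum_ge0 n w A : (0 <= postNum pi lr n w A)%E.
Proof. by apply: integral_ge0 => x _; rewrite lee_fin expR_ge0. Qed.

Lemma post_ge0 n w A : 0 <= post pi lr n w A.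
Proof. by rewrite /post divr_ge0 // fine_ge0 // postNum_ge0. Qed.

Lemma post_deg n w A : fine (postNum pi lr n w setT) = 0 -> post pi lr n w A = 0.
Proof. by rewrite /post => ->; rewrite invr0 mulr0. Qed.

Lemma post_compl n w A :
  measurable_fun setT (fun th => lr n th w) -> measurable A ->
  fine (postNum pi lr n w setT) != 0 ->
  post pi lr n w A + post pi lr n w (~` A) = 1.
Proof.
move=> mlr mA Z0.
have mf : measurable_fun (A `|` ~` A) (EFin \o (expR \o (fun th => lr n th w))).
  rewrite setUv; apply/measurable_EFinP.
  exact: (measurableT_comp (@measurable_expR R) mlr).
have E : postNum pi lr n w setT = (postNum pi lr n w A + postNum pi lr n w (~` A))%E.
  rewrite /postNum -(setUv A) ge0_integral_setU //; first exact: measurableC.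
  by rewrite /disj_set setICr.
have fT : postNum pi lr n w setT \is a fin_num.
  by move: Z0; case: (postNum pi lr n w setT) => //; rewrite eqxx.
move: Z0; rewrite /post E in fT *; move: fT; rewrite fin_numD => /andP[fa fb].
rewrite fineD // => Z0; by rewrite -mulrDl divff.
Qed.

Lemma post_le1 n w A :
  measurable_fun setT (fun th => lr n th w) -> measurable A ->
  post pi lr n w A <= 1.
Proof.
move=> mlr mA; have [Z|Z] := eqVneq (fine (postNum pi lr n w setT)) 0.
  by rewrite post_deg.
have := post_compl n w A mlr mA Z; have := post_ge0 n w (~` A); lra.
Qed.


Context (m : nat) (Ups1 : 'I_m -> set Theta) (G : 'I_m -> {set 'I_m}).

Lemma Psi_meas i d : (forall i, measurable (Ups1 i)) -> measurable (Psi Ups1 G i d).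
Proof.
move=> mU; apply: measurableI => //; apply: fin_bigcap_measurable.
  exact: finite_finset.
by move=> k _; rewrite /Ups; case: (d k) => //; exact: measurableC.
Qed.

Lemma cover rule beta n w (dt : config m) eps :
  measurable_fun setT (fun th => lr n th w) ->
  (forall i, measurable (Ups1 i)) ->
  (forall i, i \in G i) ->
  argmax_rule rule -> 0 <= beta -> 0 <= eps -> m%:R * (2 * eps + beta) < 1 ->
  (forall i d, ~ Dset G dt i d -> w_in pi lr Ups1 G i d n w < eps) ->
  (forall j, dt j -> post pi lr n w (~` Psi Ups1 G j dt) < eps) ->
  fine (postNum pi lr n w setT) != 0 ->
  forall j, dt j -> dhat pi lr Ups1 G rule beta n w j.
Proof.
move=> mlr mU GG Har b0 e0 Hm Hw Hc Z j dtj.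
have cmp i d : post pi lr n w (Psi Ups1 G i d) + post pi lr n w (~` Psi Ups1 G i d) = 1.
  exact: post_compl mlr (Psi_meas i d mU) Z.
case E: (dhat pi lr Ups1 G rule beta n w j) => //.
set d := dhat pi lr Ups1 G rule beta n w in E.
have Hmax : score pi lr Ups1 G beta n w dt <= score pi lr Ups1 G beta n w d.
  by have := Har [ffun d => score pi lr Ups1 G beta n w d] dt; rewrite !ffunE.
set K := \sum_(i < m) ((dt i)%:R : R).
have Km : K <= m%:R.
  rewrite /K -[X in _ <= X%:R]card_ord -sumr_const.
  by apply: ler_sum => i _; case: (dt i).
have L : K * (1 - eps - beta) <= score pi lr Ups1 G beta n w dt.
  rewrite /score /K mulr_suml; apply: ler_sum => i _.
  case: (boolP (dt i)) => di /=; last by rewrite !mul0r.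
  rewrite !mul1r; have := cmp i dt; have := Hc i di; rewrite /w_in; lra.
have T i : (d i)%:R * (w_in pi lr Ups1 G i d n w - beta) <=
    (dt i)%:R + eps - ((i == j)%:R : R).
  have dt0 : 0 <= (dt i)%:R :> R by [].
  have [->|ij] := eqVneq i j.
    rewrite E dtj /=.
    rewrite mul0r; lra.
  rewrite /= subr0; case: (boolP (d i)) => di /=; last by rewrite mul0r; lra.
  rewrite mul1r; case: (pselect (Dset G dt i d)) => D.
    have := D i (GG i); rewrite di => <-.
    have := post_le1 n w (Psi Ups1 G i d) mlr (Psi_meas i d mU); rewrite /w_in /=; lra.
  have := Hw i d D; lra.
have U : score pi lr Ups1 G beta n w d <= K + m%:R * eps - 1.
  apply: le_trans (ler_sum _ (fun i _ => T i)) _.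
  have S1 : \sum_(i < m) ((i == j)%:R : R) = 1.
    rewrite (bigD1 j) //= eqxx big1 ?addr0 // => i /negbTE -> //.
  rewrite !big_split /= sumrN sumr_const card_ord S1 -/K.
  by rewrite mulr_natl.
have KM : K * (eps + beta) <= m%:R * (eps + beta) by apply: ler_wpM2r => //; lra.
have e1 : K * (1 - eps - beta) = K - K * (eps + beta) by ring.
have e2 : m%:R * (2 * eps + beta) = m%:R * (eps + beta) + m%:R * eps by ring.
lra.
Qed.


Lemma FNR_le rule beta n w (dt : config m) :
  (forall j, dt j -> dhat pi lr Ups1 G rule beta n w j) \/
  (forall i, v_in pi lr Ups1 i n w = 0) ->
  FNR pi lr Ups1 G rule beta n w <=
  \sum_(i < m) (~~ dt i)%:R * v_in pi lr Ups1 i n w.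
Proof.
move=> H; rewrite /FNR (bigD1 (dhat pi lr Ups1 G rule beta n w)) //=.
rewrite /deltaNM eqxx mulr1 [X in _ + X]big1 ?addr0; last first.
  by move=> d Hd; rewrite (negbTE Hd) mulr0.
set dd := dhat pi lr Ups1 G rule beta n w.
have v0 i : 0 <= v_in pi lr Ups1 i n w by exact: post_ge0.
have num_le : \sum_(i < m) (~~ dd i)%:R * v_in pi lr Ups1 i n w <=
    \sum_(i < m) (~~ dt i)%:R * v_in pi lr Ups1 i n w.
  apply: ler_sum => i _; case: H => H; last by rewrite H !mulr0.
  case: (boolP (dt i)) => di /=.
    by rewrite (H i di) /= !mul0r.
  by case: (dd i) => /=; rewrite ?mul0r ?mul1r.
have nn : 0 <= \sum_(i < m) (~~ dd i)%:R * v_in pi lr Ups1 i n w.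
  by apply: sumr_ge0 => i _; apply: mulr_ge0.
apply: le_trans num_le.
set k := maxn _ _.
have k1 : (1 <= k)%N by rewrite /k leq_maxr.
have k0 : 0 < k%:R :> R by rewrite ltr0n.
rewrite ler_pdivrMr // ler_peMr // ler1n //.
Qed.


Lemma FNR_ge0 rule beta n w : 0 <= FNR pi lr Ups1 G rule beta n w.
Proof.
apply: sumr_ge0 => d _; apply: mulr_ge0; last by rewrite /deltaNM; case: (_ == _).
apply: divr_ge0 => //; apply: sumr_ge0 => i _; apply: mulr_ge0 => //.
exact: post_ge0.
Qed.

End Post.


Theorem theorem11
  (R : realType) (dO dT : measure_display)
  (Omega : measurableType dO) (Theta : measurableType dT)
  (P : probability Omega R) (pi : probability Theta R)
  (m : nat) (lr : nat -> Theta -> Omega -> R)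
  (Ups1 : 'I_m -> set Theta) (G : 'I_m -> {set 'I_m})
  (dt : config m) (S : {set 'I_m})
  (rule : {ffun config m -> R} -> config m)
  (beta : nat -> R) (alpha : R) :
  (1 < m)%N ->
  (forall i, i \in G i) ->
  (forall i, measurable (Ups1 i)) ->
  (forall n w, measurable_fun setT (fun th => lr n th w)) ->
  (forall th, cvgn (fun n => hseq P lr n th)) ->
  true_config P pi lr Ups1 dt ->
  standing P pi lr Ups1 G dt ->
  argmax_rule rule ->
  condG G dt S ->
  dt != config0 m -> dt != config1 m ->
  (forall n, 0 <= beta n < 1) ->
  beta @ \oo --> 0 ->
  (fun n => mpBFDR P pi lr Ups1 G rule (beta n) n) @ \oo --> alpha ->
  1 / ((\sum_(i < m) nat_of_bool (dt i))%:R + 1) < alpha ->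
  alpha < (m - #|S|)%:R / ((\sum_(i < m) nat_of_bool (dt i))%:R + (m - #|S|)%:R) ->
  let Hmin := \big[Order.min/+oo%E]_(i < m | ~~ dt i) JA P pi lr (Ups1 i) in
  {ae P, forall w,
     (limn_esup (fun n => (n%:R^-1)%:E * logE (FNR pi lr Ups1 G rule (beta n) n w))
       <= - Hmin)%E}.
Proof.
move=> m1 GG mU mlr _ _ Hst Har _ _ _ Hb bcv _ _ _ Hmin.
case: Hst => Hpsi [Hups [HD [_ [Hc1 [_ _]]]]].
pose cvp A w := (fun n => (n%:R^-1)%:E * logE (post pi lr n w A))%E @ \oo
  --> (- JA P pi lr A)%E.
have A1 : \forall w \near almost_everywhere P,
    forall i d, cvp (Psi Ups1 G i d) w /\ cvp (~` Psi Ups1 G i d) w.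
  apply: filter_forall => i; apply: filter_forall => d.
  case: (Hpsi i d) => [[_ h1] [_ h2]]; exact: filterS2 h1 h2.
have A2 : \forall w \near almost_everywhere P, forall i, cvp (Ups1 i) w.
  apply: filter_forall => i; case: (Hups i true) => _ h; exact: h.
apply: filterS2 A1 A2 => w Hw1 Hw2.
apply: le_negH => c cH.
have [c2 [cc2 c2H]] := exists_below _ _ cH.
apply: esup_le_ev.
have mpos : 0 < m%:R :> R by rewrite ltr0n; apply: ltn_trans m1.
set eps : R := (4 * m%:R)^-1.
have e0 : 0 < eps by rewrite /eps invr_gt0 mulr_gt0.
have me : m%:R * eps = 1 / 4.
  by rewrite /eps; field; rewrite gt_eqF.
have EV1 : \forall n \near \oo, forall i, ~~ dt i ->
    v_in pi lr Ups1 i n w <= expR (- c2 * n%:R).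
  apply: filter_forall => i; case: (boolP (dt i)) => di.
    by apply: nearW.
  have JH : (c2%:E < JA P pi lr (Ups1 i))%E.
    apply: lt_le_trans c2H _; rewrite /Hmin.
    by apply/bigmin_leP; right; exists i.
  have JH' : (- JA P pi lr (Ups1 i) < (- c2)%:E)%E by rewrite EFinN lteN2.
  have h := ev_lt_e _ _ _ (Hw2 i) JH'.
  have := @decay _ (fun n => post pi lr n w (Ups1 i)) c2
    (fun n => post_ge0 pi lr n w (Ups1 i)) h.
  by apply: filterS => n hn _.
have EVw : \forall n \near \oo, forall i d, ~ Dset G dt i d ->
    w_in pi lr Ups1 G i d n w < eps.
  apply: filter_forall => i; apply: filter_forall => d.
  case: (pselect (Dset G dt i d)) => D; first by apply: nearW.
  have := lim_zero _ _ (fun n => post_ge0 pi lr n w (Psi Ups1 G i d)) (Hw1 i d).1 (HD i d D) eps e0.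
  by apply: filterS => n hn _.
have EVc : \forall n \near \oo, forall j, dt j ->
    post pi lr n w (~` Psi Ups1 G j dt) < eps.
  apply: filter_forall => j; case: (boolP (dt j)) => dj; last by apply: nearW.
  have := lim_zero _ _ (fun n => post_ge0 pi lr n w (~` Psi Ups1 G j dt)) (Hw1 j dt).2 (Hc1 j dj) eps e0.
  by apply: filterS => n hn _.
have EVb : \forall n \near \oo, beta n < eps := cvgr_lt _ bcv _ e0.
near=> n.
have n1 : 1 <= n%:R :> R by near: n; exact: nbhs_infty_ger.
have n2 : ln m%:R / (c2 - c) <= n%:R :> R by near: n; exact: nbhs_infty_ger.
have hv : forall i, ~~ dt i -> v_in pi lr Ups1 i n w <= expR (- c2 * n%:R).
  by near: n.
have hw : forall i d, ~ Dset G dt i d -> w_in pi lr Ups1 G i d n w < eps.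
  by near: n.
have hc : forall j, dt j -> post pi lr n w (~` Psi Ups1 G j dt) < eps.
  by near: n.
have hb : beta n < eps by near: n; apply: EVb.
have b0 : 0 <= beta n by case/andP: (Hb n).
have Hm : m%:R * (2 * eps + beta n) < 1.
  have : m%:R * beta n < m%:R * eps by rewrite ltr_pM2l.
  have -> : m%:R * (2 * eps + beta n) = 2 * (m%:R * eps) + m%:R * beta n by ring.
  rewrite me; lra.
have FN : FNR pi lr Ups1 G rule (beta n) n w <=
    \sum_(i < m) (~~ dt i)%:R * v_in pi lr Ups1 i n w.
  apply: FNR_le; have [Z|Z] := eqVneq (fine (postNum pi lr n w setT)) 0.
    by right => i; exact: post_deg.
  by left; apply: (cover pi lr m Ups1 G rule (beta n) n w dt eps (mlr n w) mU GG Har b0 (ltW e0) Hm hw hc Z).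
have FS : \sum_(i < m) (~~ dt i)%:R * v_in pi lr Ups1 i n w <=
    m%:R * expR (- c2 * n%:R).
  apply: le_trans (_ : _ <= \sum_(i < m) expR (- c2 * n%:R)) _.
    apply: ler_sum => i _; case: (boolP (dt i)) => di /=.
      by rewrite mul0r expR_ge0.
    by rewrite mul1r; exact: hv.
  by rewrite sumr_const card_ord mulr_natl.
have F0 := FNR_ge0 pi lr m Ups1 G rule (beta n) n w.
have n0 : 0 < n%:R :> R by apply: lt_le_trans n1.
rewrite /logE; case: eqP => [E|FN0].
  by rewrite mulrNy gtr0_sg ?invr_gt0 // mul1e leNye.
rewrite -EFinM lee_fin.
have Fp : 0 < FNR pi lr Ups1 G rule (beta n) n w.
  by rewrite lt_neqAle eq_sym F0 andbT; apply/eqP.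
have hl : ln (FNR pi lr Ups1 G rule (beta n) n w) <= ln m%:R + (- c2 * n%:R).
  rewrite -[X in _ <= _ + X]expRK -lnM ?posrE ?expR_gt0 //.
  rewrite ler_ln ?posrE ?mulr_gt0 ?expR_gt0 //.
  exact: le_trans FN FS.
have hl2 : n%:R^-1 * ln (FNR pi lr Ups1 G rule (beta n) n w) <=
    n%:R^-1 * (ln m%:R + (- c2 * n%:R)).
  by rewrite ler_wpM2l // invr_ge0 ltW.
have e3 : n%:R^-1 * (ln m%:R + (- c2 * n%:R)) = ln m%:R / n%:R - c2.
  by field; rewrite gt_eqF.
rewrite e3 in hl2.
have : ln m%:R / n%:R <= c2 - c.
  by rewrite ler_pdivrMr // -ler_pdivrMl ?subr_gt0 // mulrC.
lra.
Unshelve. all: by end_near.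
Qed.
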